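(* If $\mathbf{A}$ is a finite solvable algebra with a Maltsev polynomial, then $\mathbf{A}$ is a spread of its type $\mathbf{2}$ minimal sets.
   Context: Solvability is with respect to the term condition commutator. A Maltsev polynomial is a polynomial $m$ with $m(x,y,y)=x=m(y,y,x)$. Type $\mathbf{2}$ minimal sets are the $\langle\alpha,\beta\rangle$-minimal sets (tame congruence theory) for prime quotients $\alpha\prec\beta$ of $\mathrm{Con}(\mathbf{A})$ of type $\mathbf{2}$. $A$ is a spread of a collection $\mathcal U$ of subsets if $A=p(U_1,\dots,U_k)$ for some polynomial $p$ of $\mathbf{A}$ and (not necessarily distinct) $U_i\in\mathcal U$. *)

(* Defs.v *)
From mathcomp Require Import all_boot all_order all_algebra.
Set Implicit Arguments. Unset Strict Implicit. Unset Printing Implicit Defensive.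
Import GRing.Theory.
Local Open Scope ring_scope.

Section UA.
Variables (T : finType) (I : Type) (ar : I -> nat)
          (op : forall i : I, ('I_(ar i) -> T) -> T).

(* Syntax: n-ary terms with constants (polynomial expressions). *)
Inductive term (n : nat) : Type :=
| Var : 'I_n -> term n
| Cst : T -> term n
| App : forall i : I, ('I_(ar i) -> term n) -> term n.

Fixpoint eval n (t : term n) (x : 'I_n -> T) : T :=
  match t with
  | Var i => x i
  | Cst c => c
  | App i args => op (fun j => eval (args j) x)
  end.

Fixpoint const_free n (t : term n) : Prop :=
  match t with
  | Var _ => True
  | Cst _ => False
  | App i args => forall j, const_free (args j)
  end.

Definition is_poly n (p : ('I_n -> T) -> T) : Prop :=
  exists t : term n, forall x, eval t x = p x.

Definition is_termop n (p : ('I_n -> T) -> T) : Prop :=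
  exists t : term n, const_free t /\ forall x, eval t x = p x.

Definition unary_poly (f : T -> T) : Prop := is_poly (fun x : 'I_1 -> T => f (x ord0)).

Definition mk3 (x y z : T) : 'I_3 -> T :=
  fun i => match val i with 0 => x | 1 => y | _ => z end.

Definition maltsev_poly (m : ('I_3 -> T) -> T) : Prop :=
  is_poly m /\ forall x y, m (mk3 x y y) = x /\ m (mk3 y y x) = x.

Definition congruence (R : T -> T -> Prop) : Prop :=
  [/\ (forall x, R x x), (forall x y, R x y -> R y x),
      (forall x y z, R x y -> R y z -> R x z) &
      (forall i (x y : 'I_(ar i) -> T), (forall j, R (x j) (y j)) ->
          R (op x) (op y))].

Definition rle (R S : T -> T -> Prop) : Prop := forall x y, R x y -> S x y.

Definition prime_quotient (alpha beta : T -> T -> Prop) : Prop :=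
  [/\ congruence alpha, congruence beta, rle alpha beta, ~ rle beta alpha &
      forall gamma, congruence gamma -> rle alpha gamma -> rle gamma beta ->
        rle gamma alpha \/ rle beta gamma].

Definition join_args m n (a : 'I_m -> T) (c : 'I_n -> T) : 'I_(m + n) -> T :=
  fun i => match split i with inl j => a j | inr j => c j end.

Definition centralizes (alpha beta delta : T -> T -> Prop) : Prop :=
  forall m n (t : ('I_(m + n) -> T) -> T), is_termop t ->
  forall (a b : 'I_m -> T) (c d : 'I_n -> T),
    (forall i, alpha (a i) (b i)) -> (forall j, beta (c j) (d j)) ->
    delta (t (join_args a c)) (t (join_args a d)) ->
    delta (t (join_args b c)) (t (join_args b d)).

Definition commutator (alpha beta : T -> T -> Prop) : T -> T -> Prop :=
  fun x y => forall delta, congruence delta -> centralizes alpha beta delta ->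
    delta x y.

Fixpoint derived (k : nat) : T -> T -> Prop :=
  match k with
  | 0 => fun _ _ => True
  | k.+1 => commutator (derived k) (derived k)
  end.

Definition solvable_alg : Prop :=
  exists k, forall x y, derived k x y -> x = y.

Definition img (f : T -> T) : {set T} := [set f x | x in T].

Definition sep (alpha beta : T -> T -> Prop) (f : T -> T) : Prop :=
  exists x y, beta x y /\ ~ alpha (f x) (f y).

Definition minimal_set (alpha beta : T -> T -> Prop) (U : {set T}) : Prop :=
  (exists f, [/\ unary_poly f, sep alpha beta f & U = img f]) /\
  (forall f, unary_poly f -> sep alpha beta f -> img f \subset U -> img f = U).

Definition trace (alpha beta : T -> T -> Prop) (U : {set T}) (N : T -> Prop) :=
  exists b, [/\ b \in U, (forall x, N x <-> (x \in U /\ beta b x)) &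
                exists x y, [/\ N x, N y & ~ alpha x y]].

Definition preserves n (N : T -> Prop) (p : ('I_n -> T) -> T) : Prop :=
  forall x, (forall i, N (x i)) -> N (p x).

(* The induced algebra A|_N / alpha|_N (whose operations are the polynomials
   of A preserving N) is polynomially equivalent to a vector space:
   via a bijection phi : N/alpha -> V, its polynomial operations are exactly
   the affine maps  x |-> v0 + sum_i c_i x_i  of V. *)
Definition induced_is_vector_space (alpha : T -> T -> Prop) (N : T -> Prop)
  : Prop :=
  exists (K : fieldType) (V : lmodType K) (phi : T -> V),
  [/\ (forall x y, N x -> N y -> (phi x = phi y <-> alpha x y)),
      (forall v, exists x, N x /\ phi x = v),
      (forall n (p : ('I_n -> T) -> T), is_poly p -> preserves N p ->
         exists (c : 'I_n -> K) (v0 : V), forall x, (forall i, N (x i)) ->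
           phi (p x) = v0 + \sum_(i < n) c i *: phi (x i)) &
      (forall n (c : 'I_n -> K) (v0 : V),
         exists p : ('I_n -> T) -> T, [/\ is_poly p, preserves N p &
           forall x, (forall i, N (x i)) ->
             phi (p x) = v0 + \sum_(i < n) c i *: phi (x i)])].

Definition type2 (alpha beta : T -> T -> Prop) : Prop :=
  prime_quotient alpha beta /\
  exists U N, [/\ minimal_set alpha beta U, trace alpha beta U N &
                  induced_is_vector_space alpha N].

Definition type2_minimal_set (U : {set T}) : Prop :=
  exists alpha beta, type2 alpha beta /\ minimal_set alpha beta U.

Definition spread_of (P : {set T} -> Prop) : Prop :=
  exists k (p : ('I_k -> T) -> T) (Us : 'I_k -> {set T}),
    [/\ is_poly p, (forall i, P (Us i)) &
        forall a, exists u : 'I_k -> T, (forall i, u i \in Us i) /\ p u = a].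

End UA.

(* Main.v *)
Require Import Defs.
From HB Require Import structures.
From mathcomp Require Import all_boot all_order all_algebra all_field.
From mathcomp Require Import zify.
From Stdlib Require Import ClassicalEpsilon FunctionalExtensionality Setoid Morphisms.

Module FBm.
Set Implicit Arguments. Unset Strict Implicit. Unset Printing Implicit Defensive.

Section FieldBuild.
Import GRing.Theory.
Local Open Scope ring_scope.
Variables (K : finType) (z o : K) (add : K -> K -> K) (opp : K -> K) (mul : K -> K -> K).
Hypotheses (haddA : associative add) (haddC : commutative add) (hadd0 : left_id z add)
  (haddN : left_inverse z opp add) (hmulA : associative mul) (hmul1l : left_id o mul)
  (hmul1r : right_id o mul) (hmulDl : left_distributive mul add)
  (hmulDr : right_distributive mul add) (honz : o != z)
  (dom : forall x y, mul x y = z -> x = z \/ y = z).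

Definition KK : Type := Finite.sort K.
HB.instance Definition _ := Finite.on KK.
HB.instance Definition _ := GRing.isZmodule.Build KK haddA haddC hadd0 haddN.
HB.instance Definition _ :=
  (@GRing.Zmodule_isNzRing.Build KK o mul hmulA hmul1l hmul1r hmulDl hmulDr honz).
Notation KR := KK.

Lemma mul0x (x : KR) : mul z x = z.
Proof. exact: (@mul0r KR). Qed.

Lemma has_inv (x : KR) : x != 0 -> exists y : KR, y * x = 1 /\ x * y = 1.
Proof.
move=> nx.
have inj : injective (fun y : KR => x * y).
  move=> y1 y2 /= e. apply: (@subr0_eq KR).
  have: x * (y1 - y2) = 0 by rewrite mulrBr e subrr.
  by case/dom => // ex; rewrite ex eqxx in nx.
have [y xy] : exists y, x * y = 1.
  case: (injF_bij inj) => g h1 h2. by exists (g (1 : KR)); rewrite h2.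
exists y; split=> //.
apply: inj => /=. by rewrite mulrA xy mul1r mulr1.
Qed.

Definition Kinv (x : KR) : KR :=
  if x == 0 then x else odflt x [pick y : KR | (y * x == 1) && (x * y == 1)].

Lemma KmulV : {in [pred x : KR | x != 0], left_inverse 1 Kinv *%R}.
Proof.
move=> x; rewrite inE => nx; rewrite /Kinv (negbTE nx).
case: pickP => [y /andP[/eqP -> _]//|].
by case: (has_inv nx) => y [e1 e2] /(_ y); rewrite e1 e2 !eqxx.
Qed.
Lemma KdivV : {in [pred x : KR | x != 0], right_inverse 1 Kinv *%R}.
Proof.
move=> x; rewrite inE => nx; rewrite /Kinv (negbTE nx).
case: pickP => [y /andP[_ /eqP -> ]//|].
by case: (has_inv nx) => y [e1 e2] /(_ y); rewrite e1 e2 !eqxx.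
Qed.
Lemma KunitP (x y : KR) : y * x = 1 /\ x * y = 1 -> x \in [pred x : KR | x != 0].
Proof.
case=> e1 _; rewrite inE; apply/eqP => ex; move: e1; rewrite ex mulr0 => /eqP.
by rewrite eq_sym oner_eq0.
Qed.
Lemma Kinv_out : {in [predC [pred x : KR | x != 0]], Kinv =1 id}.
Proof. by move=> x; rewrite !inE negbK /Kinv => ->. Qed.

HB.instance Definition _ :=
  (GRing.NzRing_hasMulInverse.Build KK KmulV KdivV KunitP Kinv_out).
Notation KU := KK.

Lemma Kdom : GRing.integral_domain_axiom KU.
Proof. move=> x y /dom [] ->; by rewrite eqxx ?orbT. Qed.

Definition KF : finFieldType := FinDomainFieldType Kdom.

Lemma KF_add (x y : KF) : x + y = add x y. Proof. by []. Qed.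
Lemma KF_mul (x y : KF) : x * y = mul x y. Proof. by []. Qed.
Lemma KF_zero : (0 : KF) = z. Proof. by []. Qed.
End FieldBuild.

End FBm.
Import FBm.

Module P1m.
Set Implicit Arguments. Unset Strict Implicit. Unset Printing Implicit Defensive.

Definition pb (P : Prop) : bool := if excluded_middle_informative P then true else false.
Lemma pbP (P : Prop) : reflect P (pb P).
Proof. rewrite /pb; case: excluded_middle_informative => h; by constructor. Qed.

Section Infra.
Variables (T : finType) (I : Type) (ar : I -> nat)
          (op : forall i : I, ('I_(ar i) -> T) -> T).
Notation term := (term T ar).
Notation eval := (eval op).
Notation is_poly := (is_poly op).

Fixpoint subst n k (t : term n) (s : 'I_n -> term k) : term k :=
  match t with
  | Var i => s i
  | Cst c => Cst ar k c
  | App i args => App (fun j => subst (args j) s)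
  end.

Lemma eval_subst n k (t : term n) (s : 'I_n -> term k) x :
  eval (subst t s) x = eval t (fun j => eval (s j) x).
Proof.
elim: t => [i|c|i args IH] //=. congr (op _); apply: functional_extensionality_dep => j; exact: IH.
Qed.

Lemma poly_ext n (p q : ('I_n -> T) -> T) : is_poly p -> (forall x, p x = q x) -> is_poly q.
Proof. by case=> t ht e; exists t => x; rewrite ht. Qed.

Lemma poly_comp n k (p : ('I_n -> T) -> T) (q : 'I_n -> ('I_k -> T) -> T) :
  is_poly p -> (forall j, is_poly (q j)) -> is_poly (fun x => p (fun j => q j x)).
Proof.
case=> t ht hq.
pose s j := proj1_sig (constructive_indefinite_description _ (hq j)).
have hs j x : eval (s j) x = q j x.
  by rewrite /s; case: constructive_indefinite_description.
exists (subst t s) => x; rewrite eval_subst -ht; congr (eval t _).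
by apply: functional_extensionality => j; rewrite hs.
Qed.

Lemma poly_proj n (i : 'I_n) : is_poly (fun x => x i).
Proof. by exists (Var T ar i). Qed.

Lemma poly_cst n (c : T) : is_poly (fun _ : 'I_n -> T => c).
Proof. by exists (Cst ar n c). Qed.

Lemma poly_op n i (q : 'I_(ar i) -> ('I_n -> T) -> T) :
  (forall j, is_poly (q j)) -> is_poly (fun x => op (fun j => q j x)).
Proof.
move=> hq.
pose s j := proj1_sig (constructive_indefinite_description _ (hq j)).
have hs j x : eval (s j) x = q j x.
  by rewrite /s; case: constructive_indefinite_description.
exists (App (fun j => s j)) => x /=; congr (op _).
by apply: functional_extensionality => j; rewrite hs.
Qed.

Lemma cong_poly (R : T -> T -> Prop) n (p : ('I_n -> T) -> T) x y :
  congruence op R -> is_poly p -> (forall i, R (x i) (y i)) -> R (p x) (p y).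
Proof.
case=> Rr _ _ Rc [t ht] hxy; rewrite -!ht; clear ht.
elim: t => [i|c|i args IH] /=; [exact: hxy| exact: Rr| exact: Rc].
Qed.

Lemma unary_polyP (f : T -> T) : unary_poly op f <-> is_poly (fun x : 'I_1 -> T => f (x ord0)).
Proof. by []. Qed.

Lemma upoly_app n (f : T -> T) (p : ('I_n -> T) -> T) :
  unary_poly op f -> is_poly p -> is_poly (fun x => f (p x)).
Proof.
move=> hf hp. have := poly_comp (q := fun (_ : 'I_1) => p) hf (fun _ => hp). by [].
Qed.

Lemma upoly_of (f : T -> T) n (p : ('I_n -> T) -> T) (i : 'I_n) :
  is_poly p -> n = 1%N -> unary_poly op f -> True.
Proof. by []. Qed.

Lemma poly_upoly (p : ('I_1 -> T) -> T) (g : T -> 'I_1 -> T) :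
  is_poly p -> (forall j, unary_poly op (fun x => g x j)) -> unary_poly op (fun x => p (g x)).
Proof.
move=> hp hg; rewrite /unary_poly.
exact: (poly_comp (q := fun j (y : 'I_1 -> T) => g (y ord0) j) hp hg).
Qed.

Lemma upoly_comp n (p : ('I_n -> T) -> T) (g : 'I_n -> T -> T) :
  is_poly p -> (forall j, unary_poly op (g j)) -> unary_poly op (fun x => p (fun j => g j x)).
Proof.
move=> hp hg; rewrite /unary_poly.
exact: (poly_comp (q := fun j (y : 'I_1 -> T) => g j (y ord0)) hp hg).
Qed.

Lemma upoly_id : unary_poly op id.
Proof. exact: poly_proj. Qed.
Lemma upoly_cst c : unary_poly op (fun _ => c).
Proof. exact: poly_cst. Qed.
Lemma upoly_compose f g : unary_poly op f -> unary_poly op g -> unary_poly op (f \o g).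
Proof. move=> hf hg; exact: (upoly_app hf hg). Qed.

Lemma cong_upoly R f x y : congruence op R -> unary_poly op f -> R x y -> R (f x) (f y).
Proof.
move=> hR hf hxy. apply: (cong_poly (x := fun _ => x) (y := fun _ => y) hR hf) => //.
Qed.

End Infra.

End P1m.
Import P1m.

Module P2m.
Set Implicit Arguments. Unset Strict Implicit. Unset Printing Implicit Defensive.

Section TC.
Variables (T : finType) (I : Type) (ar : I -> nat)
          (op : forall i : I, ('I_(ar i) -> T) -> T).
Notation term := (term T ar).
Notation eval := (eval op).
Notation is_poly := (is_poly op).

Lemma split_l m n (j : 'I_m) : split (lshift n j) = inl j.
Proof. exact: (unsplitK (inl j)). Qed.
Lemma split_r m n (j : 'I_n) : split (rshift m j) = inr j.
Proof. exact: (unsplitK (inr j)). Qed.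

Section CE.
Variables m n : nat.
Definition reix (i : 'I_(m + n)) : 'I_((m + #|T|) + n) :=
  match split i with inl j => lshift n (lshift #|T| j) | inr j => rshift (m + #|T|) j end.
Fixpoint ce (t : term (m + n)) : term ((m + #|T|) + n) :=
  match t with
  | Var i => Var T ar (reix i)
  | Cst c => Var T ar (lshift n (rshift m (enum_rank c)))
  | App i args => App (fun j => ce (args j))
  end.
Lemma ce_free t : const_free (ce t).
Proof. elim: t => //= i args IH j; exact: IH. Qed.
Definition cs : 'I_#|T| -> T := fun i => enum_val i.
Lemma eval_ce t (a : 'I_m -> T) (c : 'I_n -> T) :
  eval (ce t) (join_args (join_args a cs) c) = eval t (join_args a c).
Proof.
elim: t => [i|x|i args IH] /=.
- rewrite /reix /join_args; case: (split i) => j; by rewrite ?split_l ?split_r.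
- by rewrite /join_args split_l split_r /cs enum_rankK.
- congr (op _); apply: functional_extensionality => j; exact: IH.
Qed.
End CE.

Lemma tc_poly (alpha beta delta : T -> T -> Prop) :
  centralizes op alpha beta delta -> (forall x, alpha x x) ->
  forall m n (P : ('I_(m + n) -> T) -> T), is_poly P ->
  forall (a b : 'I_m -> T) (c d : 'I_n -> T),
    (forall i, alpha (a i) (b i)) -> (forall j, beta (c j) (d j)) ->
    delta (P (join_args a c)) (P (join_args a d)) ->
    delta (P (join_args b c)) (P (join_args b d)).
Proof.
move=> hC hr m n P [t ht] a b c d hab hcd.
rewrite -!ht -!(eval_ce t).
apply: (hC (m + #|T|)%N n (eval (ce t))) => //.
- by exists (ce t); split=> //; apply: ce_free.
- move=> i; rewrite /join_args; case: (split i) => j //; exact: hr.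
Qed.
End TC.

End P2m.
Import P2m.

Module P3m.
Set Implicit Arguments. Unset Strict Implicit. Unset Printing Implicit Defensive.

Section Affine.
Variables (T : finType) (I : Type) (ar : I -> nat)
          (op : forall i : I, ('I_(ar i) -> T) -> T).
Notation is_poly := (is_poly op).
Variable m : ('I_3 -> T) -> T.
Hypothesis hm : maltsev_poly op m.
Definition M x y z := m (mk3 x y z).
Lemma Mxyy x y : M x y y = x. Proof. by case: hm => _ /(_ x y) []. Qed.
Lemma Myyx x y : M y y x = x. Proof. by case: hm => _ /(_ x y) []. Qed.

Lemma poly_M n (A B C : ('I_n -> T) -> T) :
  is_poly A -> is_poly B -> is_poly C -> is_poly (fun u => M (A u) (B u) (C u)).
Proof.
move=> hA hB hC; case: hm => hmp _.
apply: (poly_comp (q := fun j u => mk3 (A u) (B u) (C u) j) hmp).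
by case=> [[|[|[|k]]] hk] //=.
Qed.

Lemma upoly_M (A B C : T -> T) :
  unary_poly op A -> unary_poly op B -> unary_poly op C ->
  unary_poly op (fun u => M (A u) (B u) (C u)).
Proof. move=> hA hB hC; exact: (poly_M hA hB hC). Qed.

Lemma cong_M (R : T -> T -> Prop) x y z x' y' z' : congruence op R ->
  R x x' -> R y y' -> R z z' -> R (M x y z) (M x' y' z').
Proof.
move=> hR h1 h2 h3; case: hm => hmp _.
apply: (cong_poly hR hmp); by case=> [[|[|[|k]]] hk] //=.
Qed.

Variables (beta delta : T -> T -> Prop).
Hypotheses (hbeta : congruence op beta) (hdr : forall x, delta x x)
  (hC : centralizes op beta beta delta).

Lemma join_l n (a c : 'I_n -> T) : (fun i => join_args a c (lshift n i)) = a.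
Proof. by apply: functional_extensionality => i; rewrite /join_args split_l. Qed.
Lemma join_r n (a c : 'I_n -> T) : (fun i => join_args a c (rshift n i)) = c.
Proof. by apply: functional_extensionality => i; rewrite /join_args split_r. Qed.

Lemma affine n (p : ('I_n -> T) -> T) (x y z : 'I_n -> T) : is_poly p ->
  (forall i, beta (y i) (x i)) -> (forall i, beta (y i) (z i)) ->
  delta (M (p x) (p y) (p z)) (p (fun i => M (x i) (y i) (z i))).
Proof.
move=> hp hyx hyz.
have hbr : forall u, beta u u by case: hbeta.
pose c := M (p x) (p y) (p z).
pose F (w v : 'I_n -> T) := M (p (fun i => M (w i) (y i) (v i))) (M (p w) (p y) (p v)) c.
pose s (u : 'I_(n + n) -> T) := F (fun i => u (lshift n i)) (fun i => u (rshift n i)).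
have sE a d : s (join_args a d) = F a d by rewrite /s join_l join_r.
have sp : is_poly s.
  apply: poly_M; last exact: poly_cst.
    apply: (poly_comp (q := fun i (u : 'I_(n + n) -> T) => M (u (lshift n i)) (y i) (u (rshift n i))) hp) => i.
    by apply: poly_M; [apply: poly_proj | apply: poly_cst | apply: poly_proj].
  apply: poly_M.
  - exact: (poly_comp (q := fun i (u : 'I_(n + n) -> T) => u (lshift n i)) hp (fun i => poly_proj _ _)).
  - exact: poly_cst.
  - exact: (poly_comp (q := fun i (u : 'I_(n + n) -> T) => u (rshift n i)) hp (fun i => poly_proj _ _)).
have := tc_poly hC hbr sp hyx hyz.
rewrite !sE /F.
have e1 v : (fun i => M (y i) (y i) (v i)) = v by apply: functional_extensionality => i; rewrite Myyx.
have e2 : (fun i => M (x i) (y i) (y i)) = x by apply: functional_extensionality => i; rewrite Mxyy.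
rewrite !e1 e2 !Myyx Mxyy.
move/(_ (hdr c)); by rewrite Myyx -/c Mxyy.
Qed.
End Affine.

End P3m.
Import P3m.

Module P4m.
Set Implicit Arguments. Unset Strict Implicit. Unset Printing Implicit Defensive.
Import GRing.Theory.

Lemma perm_iter (T : finType) (U : {set T}) (s : T -> T) :
  (forall u, u \in U -> exists2 w, w \in U & s w = u) ->
  exists2 j, (0 < j)%N & forall u, u \in U -> iter j s u = u.
Proof.
move=> hs.
pose F (i : 'I_(#|{ffun T -> T}|.+1)) : {ffun T -> T} := [ffun x => iter i s x].
have : ~~ injectiveb F.
  apply/negP => /injectiveP inj.
  by have := leq_card F inj; rewrite card_ord ltnn.
case/injectivePn => i1 [i2 ne e].
have key : forall i1 i2 : 'I_(#|{ffun T -> T}|.+1), (i1 < i2)%N -> F i1 = F i2 ->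
    exists2 j, (0 < j)%N & forall u, u \in U -> iter j s u = u.
  move=> a c ac eac; exists (c - a)%N; first by rewrite subn_gt0.
  move=> u uU.
  have [w wU <-] : exists2 w, w \in U & iter a s w = u.
    elim: (nat_of_ord a) u uU => [|k IH] u uU; first by exists u.
    have [w1 w1U <-] := hs u uU. have [w wU ew] := IH w1 w1U.
    by exists w => //; rewrite iterS ew.
  have := congr1 (fun g : {ffun T -> T} => g w) eac; rewrite !ffunE => eq.
  by rewrite -iterD subnK ?eq // ltnW.
case: (ltngtP i1 i2) => h. exact: key h e. exact: key h (esym e).
by move: ne; rewrite (val_inj h) eqxx.
Qed.

Lemma sum_splitS (R : zmodType) n (F : 'I_n -> R) j (hj : (j < n)%N) :
  (\sum_(i < n | (i < j.+1)%N) F i = \sum_(i < n | (i < j)%N) F i + F (Ordinal hj))%R.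
Proof.
rewrite (bigD1 (Ordinal hj)) /=; last by rewrite ltnS leqnn.
rewrite GRing.addrC; congr (_ + _)%R; apply: eq_bigl => i.
by rewrite -val_eqE /= ltnS [(i < j)%N]ltn_neqAle andbC.
Qed.

Section Core.
Variables (T : finType) (I : Type) (ar : I -> nat)
          (op : forall i : I, ('I_(ar i) -> T) -> T).
Variable m : ('I_3 -> T) -> T.
Hypothesis hm : maltsev_poly op m.
Local Notation MM := (M m).
Variables (al ga de : T -> T -> Prop).
Hypotheses (hal : congruence op al) (hga : congruence op ga)
  (hpq : prime_quotient op al ga) (hder : forall x, de x x) (hdal : rle de al)
  (hC : centralizes op ga ga de).

Lemma alr x : al x x. Proof. by case: hal. Qed.
Lemma als x y : al x y -> al y x. Proof. by case: hal => _ h _ _; apply: h. Qed.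
Lemma alt x y z : al x y -> al y z -> al x z. Proof. by case: hal => _ _ h _; apply: h. Qed.
Lemma gar x : ga x x. Proof. by case: hga. Qed.
Lemma gas x y : ga x y -> ga y x. Proof. by case: hga => _ h _ _; apply: h. Qed.
Lemma gat x y z : ga x y -> ga y z -> ga x z. Proof. by case: hga => _ _ h _; apply: h. Qed.

#[local] Instance al_Equiv : Equivalence al.
Proof. split; [exact: alr | exact: als | exact: alt]. Qed.
#[local] Instance M_Proper : Proper (al ==> al ==> al ==> al) MM.
Proof. move=> x x' h1 y y' h2 z z' h3; exact: (cong_M hm hal). Qed.

Lemma Maff (a1 a2 a3 b1 b2 b3 c1 c2 c3 : T) :
  ga b1 a1 -> ga b2 a2 -> ga b3 a3 -> ga b1 c1 -> ga b2 c2 -> ga b3 c3 ->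
  al (MM (MM a1 a2 a3) (MM b1 b2 b3) (MM c1 c2 c3))
     (MM (MM a1 b1 c1) (MM a2 b2 c2) (MM a3 b3 c3)).
Proof.
move=> h1 h2 h3 h4 h5 h6; apply: hdal.
have := affine hm hga hder hC (p := m) (x := mk3 a1 a2 a3) (y := mk3 b1 b2 b3)
  (z := mk3 c1 c2 c3).
case: hm => hmp _; move/(_ hmp).
have e : (fun i => MM (mk3 a1 a2 a3 i) (mk3 b1 b2 b3 i) (mk3 c1 c2 c3 i)) =
         mk3 (MM a1 b1 c1) (MM a2 b2 c2) (MM a3 b3 c3).
  by apply: functional_extensionality => -[[|[|[|k]]] hk].
rewrite e; apply; by case=> [[|[|[|k]]] hk].
Qed.

Lemma lin (h : T -> T) x w y : unary_poly op h -> ga w x -> ga w y ->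
  al (MM (h x) (h w) (h y)) (h (MM x w y)).
Proof.
move=> hh h1 h2; apply: hdal.
have := affine hm hga hder hC (p := fun u : 'I_1 -> T => h (u ord0))
  (x := fun _ => x) (y := fun _ => w) (z := fun _ => y) hh.
by apply.
Qed.

Variable b : T.
Definition B x := ga b x.
Lemma BM x y z : B x -> B y -> B z -> B (MM x y z).
Proof.
move=> hx hy hz; rewrite /B -[b](Mxyy hm b b); apply: (cong_M hm hga) => //.
Qed.
Lemma Bga x y : B x -> B y -> ga x y.
Proof. move=> hx hy; apply: gat (gas hx) hy. Qed.

Lemma Acomm x y : B x -> B y -> al (MM x b y) (MM y b x).
Proof.
move=> hx hy.
have := @Maff b b x b b b y b b.
rewrite !(Myyx hm) !(Mxyy hm); apply; rewrite /B in hx hy |- *; by auto using gar, gas.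
Qed.

Lemma Aassoc x y z : B x -> B y -> B z -> al (MM (MM x b y) b z) (MM x b (MM y b z)).
Proof.
move=> hx hy hz.
have := @Maff x b y b b b b b z.
rewrite !(Myyx hm) !(Mxyy hm); apply; rewrite /B in hx hy hz |- *; by auto using gar, gas.
Qed.

Lemma Ainv x : B x -> al (MM x b (MM b x b)) b.
Proof.
move=> hx.
have := @Maff b b x b b b b x b.
rewrite !(Myyx hm) !(Mxyy hm) => h; rewrite h ?(Myyx hm); rewrite /B in hx |- *; by auto using gar, gas.
Qed.

Lemma Mdec x y z : B x -> B y -> B z -> al (MM x y z) (MM x b (MM z y b)).
Proof.
move=> hx hy hz.
have := @Maff x z z z z b z y b.
rewrite !(Myyx hm) !(Mxyy hm) => h; symmetry; apply: h;
  by eauto using gar, gas, Bga.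
Qed.


Lemma cid_ex (A : Type) (P : A -> Prop) : (exists x, P x) -> {x | P x}.
Proof. exact: constructive_indefinite_description. Qed.

(* the congruence generated over al by a pair *)
Lemma genR c d : ga c d -> ~ al c d -> forall x y, ga x y ->
  exists h, [/\ unary_poly op h, al (h c) x & al (h d) y].
Proof.
move=> gcd nacd.
pose R x y := exists h, [/\ unary_poly op h, al (h c) x & al (h d) y].
have Rc : congruence op R.
  split.
  - move=> x; exists (fun _ => x); split=> //; [exact: upoly_cst| exact: alr| exact: alr].
  - move=> x y [h [hh h1 h2]].
    exists (fun u => MM (h c) (h u) (h d)); split.
    + by apply: upoly_M => //; [exact: upoly_cst| exact: upoly_cst].
    + by rewrite (Myyx hm).
    + by rewrite (Mxyy hm).
  - move=> x y z [h1 [hh1 a1 a2]] [h2 [hh2 a3 a4]].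
    exists (fun u => MM (h1 u) (h2 c) (h2 u)); split.
    + by apply: upoly_M => //; exact: upoly_cst.
    + by rewrite (Mxyy hm).
    + have : al (MM (h1 d) (h2 c) (h2 d)) (MM (h2 c) (h2 c) (h2 d)).
        by apply: (cong_M hm hal); [apply: alt a2 (als a3)| exact: alr| exact: alr].
      rewrite (Myyx hm) => h; exact: alt h a4.
  - move=> i x y hxy.
    pose hs j := proj1_sig (cid_ex (hxy j)).
    have hsP j : [/\ unary_poly op (hs j), al (hs j c) (x j) & al (hs j d) (y j)].
      by rewrite /hs; case: cid_ex.
    exists (fun u => op (fun j => hs j u)); split.
    + apply: (poly_op (q := fun j (u : 'I_1 -> T) => hs j (u ord0))) => j; by case: (hsP j).
    + case: hal => _ _ _ hc; apply: hc => j; by case: (hsP j).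
    + case: hal => _ _ _ hc; apply: hc => j; by case: (hsP j).
have [_ _ _ _ hprime] := hpq.
have alR : rle al R.
  move=> x y axy; exists (fun _ => x); split=> //; [exact: upoly_cst| exact: alr].
have Rga : rle R ga.
  move=> x y [h [hh h1 h2]].
  have g1 : ga (h c) (h d) := cong_upoly hga hh gcd.
  case: hal => _ _ _ _; move: h1 h2 => h1 h2.
  have sub : rle al ga by case: hpq.
  apply: gat (sub _ _ (als h1)) (gat g1 (sub _ _ h2)).
case: (hprime R Rc alR Rga) => [/(_ c d) h|h] x y gxy.
  exfalso; apply: nacd; apply: h; exists id; split; [exact: upoly_id| exact: alr| exact: alr].
exact: h.
Qed.

Lemma upoly_iter (s : T -> T) j : unary_poly op s -> unary_poly op (iter j s).
Proof.
move=> hs; elim: j => [|j IH]; first exact: upoly_id.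
exact: (poly_ext (upoly_compose hs IH)).
Qed.

Lemma in_img (g : T -> T) x : g x \in img g.
Proof. by apply/imsetP; exists x. Qed.

Variables (f : T -> T) (x0 y0 : T).
Hypotheses (hf : unary_poly op f) (hgxy : ga x0 y0) (hnxy : ~ al (f x0) (f y0))
 (hmin : forall g, unary_poly op g -> sep al ga g -> img g \subset img f -> img g = img f)
 (hb : b = f x0).
Definition b' := f y0.
Lemma gbb' : ga b b'. Proof. by rewrite hb; exact: cong_upoly hga hf hgxy. Qed.
Lemma nbb' : ~ al b b'. Proof. by rewrite hb. Qed.
Lemma bU : b \in img f. Proof. by rewrite hb in_img. Qed.
Lemma b'U : b' \in img f. Proof. exact: in_img. Qed.

Lemma e_ex : exists e, [/\ unary_poly op e, forall x, e x \in img f & forall u, u \in img f -> e u = u].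
Proof.
have [h [hh h1 h2]] := genR gbb' nbb' hgxy.
pose s x := f (h x).
have hs : unary_poly op s by exact: (upoly_compose hf hh).
pose q x := s (f x).
have hq : unary_poly op q by exact: (upoly_compose hs hf).
have sepq : sep al ga q.
  exists x0, y0; split=> // aq; apply: hnxy.
  have e1 : al (q x0) (f x0).
    have -> : q x0 = f (h b) by rewrite /q /s hb.
    exact: cong_upoly hal hf h1.
  have e2 : al (q y0) (f y0) by exact: cong_upoly hal hf h2.
  exact: alt (als e1) (alt aq e2).
have sub : img q \subset img f.
  by apply/subsetP => y /imsetP [x _ ->]; rewrite /q /s; exact: in_img.
have iq := hmin hq sepq sub.
have surj : forall u, u \in img f -> exists2 w, w \in img f & s w = u.
  move=> u; rewrite -iq => /imsetP [t _ ->]; exists (f t); [rewrite iq; exact: in_img| by []].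
have [j j0 hj] := perm_iter surj.
exists (iter j s); split.
- exact: upoly_iter.
- by move=> x; case: j j0 {hj} => // j _; rewrite iterS /s; exact: in_img.
- exact: hj.
Qed.


Variable e : T -> T.
Hypotheses (he : unary_poly op e) (heU : forall x, e x \in img f)
  (heid : forall u, u \in img f -> e u = u).

Definition Nb x := (x \in img f) && pb (ga b x).
Lemma NbU x : Nb x -> x \in img f. Proof. by case/andP. Qed.
Lemma NbB x : Nb x -> B x. Proof. by case/andP => _ /pbP. Qed.
Lemma Nb_b : Nb b. Proof. by rewrite /Nb bU; apply/pbP; exact: gar. Qed.
Lemma Nb_b' : Nb b'. Proof. by rewrite /Nb b'U; apply/pbP; exact: gbb'. Qed.
Lemma B_b : B b. Proof. exact: gar. Qed.
Lemma eb : e b = b. Proof. exact: heid bU. Qed.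
Lemma Nb_e y : B y -> Nb (e y).
Proof.
move=> hy; rewrite /Nb heU; apply/pbP; rewrite /B -eb; exact: cong_upoly hga he hy.
Qed.
Lemma e_N x : Nb x -> e x = x. Proof. by move/NbU; exact: heid. Qed.
Lemma edrop x y z : Nb x -> Nb y -> Nb z -> al (e (MM x y z)) (MM x y z).
Proof.
move=> hx hy hz.
have := lin he (x := x) (w := y) (y := z).
rewrite (e_N hx) (e_N hy) (e_N hz) => h; apply: als; apply: h; apply: Bga; exact: NbB.
Qed.

Definition rep x := odflt x [pick y | Nb y && pb (al x y)].
Lemma rep_spec x : Nb x -> Nb (rep x) /\ al x (rep x).
Proof.
move=> hx; rewrite /rep; case: pickP => [y /andP [? /pbP ?]//|].
by move/(_ x); rewrite hx /= => /negbT/pbP; case; exact: alr.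
Qed.
Lemma Nb_rep x : Nb x -> Nb (rep x). Proof. by case/rep_spec. Qed.
Lemma rep_al x : Nb x -> al (rep x) x. Proof. by case/rep_spec => _ /als. Qed.
Lemma rep_eq x y : al x y -> Nb x -> rep x = rep y.
Proof.
move=> axy hx; rewrite /rep.
have -> : [pick t | Nb t && pb (al x t)] = [pick t | Nb t && pb (al y t)].
  apply: eq_pick => t /=; congr (_ && _).
  by apply/pbP/pbP => h; [exact: alt (als axy) h| exact: alt axy h].
case: pickP => //= /(_ x); rewrite hx /= => /negbT/pbP []; exact: als.
Qed.

Hint Resolve NbB Nb_b Nb_b' B_b Nb_e Nb_rep BM : kdb.

Lemma test x y z : Nb x -> Nb y -> Nb z -> al (rep (e (MM x b y))) (MM y b x).
Proof.
move=> hx hy hz.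
rewrite rep_al; auto with kdb.
Abort.

#[local] Instance e_Proper : Proper (al ==> al) e.
Proof. move=> x y h; exact: cong_upoly hal he h. Qed.

Definition normK (k : T -> T) : {ffun T -> T} := [ffun x => if Nb x then rep (k x) else b].
Lemma normKE k x : Nb x -> normK k x = rep (k x). Proof. by rewrite ffunE => ->. Qed.
Lemma normK_ext k1 k2 : (forall x, Nb x -> Nb (k1 x)) ->
  (forall x, Nb x -> al (k1 x) (k2 x)) -> normK k1 = normK k2.
Proof.
move=> hN h; apply/ffunP => x; rewrite !ffunE; case: ifP => // hx.
exact: rep_eq (h x hx) (hN x hx).
Qed.

Definition isK (g : {ffun T -> T}) := exists k,
  [/\ unary_poly op k, (forall x, Nb x -> Nb (k x)), al (k b) b & g = normK k].
Definition Kt := {g : {ffun T -> T} | pb (isK g)}.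

Lemma KtP (g : Kt) : exists k,
  [/\ unary_poly op k, (forall x, Nb x -> Nb (k x)), al (k b) b &
      forall x, Nb x -> al (val g x) (k x)].
Proof.
case: g => g /= /pbP [k [hk hN hb0 ->]]; exists k; split=> // x hx.
by rewrite normKE //; apply: rep_al; auto.
Qed.
Lemma Kt_N (g : Kt) x : Nb x -> Nb (val g x).
Proof.
case: g => g /= /pbP [k [hk hN hb0 ->]] hx; rewrite normKE //; auto with kdb.
Qed.
Hint Resolve Kt_N : kdb.
Lemma Kt_compat (g : Kt) x y : Nb x -> Nb y -> al x y -> val g x = val g y.
Proof.
case: g => g /= /pbP [k [hk hN hb0 ->]] hx hy axy.
rewrite !normKE //; apply: rep_eq; [exact: cong_upoly hal hk axy| exact: hN].
Qed.
Lemma Kt_b (g : Kt) : al (val g b) b.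
Proof. have [k [_ _ hb0 hg]] := KtP g; exact: alt (hg _ Nb_b) hb0. Qed.
Lemma Kt_norm (g : Kt) : val g = normK (val g).
Proof.
case: g => g /= /pbP [k [hk hN hb0 ->]]; apply/ffunP => x; rewrite [RHS]ffunE.
case: ifP => hx; last by rewrite ffunE hx.
rewrite normKE //; apply: rep_eq; [apply: als; apply: rep_al|]; auto with kdb.
Qed.
Lemma Kt_eq (g h : Kt) : (forall x, Nb x -> al (val g x) (val h x)) -> g = h.
Proof.
move=> e1; apply: val_inj; rewrite Kt_norm [RHS]Kt_norm; apply: normK_ext => //.
exact: Kt_N.
Qed.

Lemma isK_mk k k' : unary_poly op k -> (forall x, Nb x -> Nb (k x)) -> al (k b) b ->
  (forall x, Nb x -> al (k x) (k' x)) -> pb (isK (normK k')).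
Proof.
move=> hk hN hb0 hkk; apply/pbP; exists k; split=> //.
by apply: esym; apply: normK_ext.
Qed.

Lemma Kt_rep (g : Kt) y : Nb y -> val g (rep y) = val g y.
Proof. move=> hy; apply: Kt_compat; auto with kdb; exact: rep_al. Qed.

Lemma kz_proof : pb (isK (normK (fun _ => b))).
Proof. apply: (isK_mk (k := fun _ => b)); [exact: upoly_cst| by move=> *; exact: Nb_b| exact: alr| move=> *; exact: alr]. Qed.
Definition kz : Kt := exist (fun g => pb (isK g)) _ kz_proof.
Lemma ko_proof : pb (isK (normK id)).
Proof. apply: (isK_mk (k := id)); [exact: upoly_id| by []| exact: alr| move=> *; exact: alr]. Qed.
Definition ko : Kt := exist (fun g => pb (isK g)) _ ko_proof.

Lemma kadd_proof (g h : Kt) : pb (isK (normK (fun x => e (MM (val g x) b (val h x))))).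
Proof.
have [kg [hkg hNg hbg hg]] := KtP g; have [kh [hkh hNh hbh hh]] := KtP h.
apply: (isK_mk (k := fun x => e (MM (kg x) b (kh x)))).
- apply: (upoly_compose he); apply: upoly_M => //; exact: upoly_cst.
- by move=> x hx; apply: Nb_e; apply: BM; auto with kdb.
- by setoid_rewrite hbg; setoid_rewrite hbh; rewrite (Mxyy hm) eb; exact: alr.
- by move=> x hx; setoid_rewrite <- hg; [setoid_rewrite <- hh|]; auto; reflexivity.
Qed.
Definition kadd (g h : Kt) : Kt := exist (fun g => pb (isK g)) _ (kadd_proof g h).

Lemma kopp_proof (g : Kt) : pb (isK (normK (fun x => e (MM b (val g x) b)))).
Proof.
have [kg [hkg hNg hbg hg]] := KtP g.
apply: (isK_mk (k := fun x => e (MM b (kg x) b))).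
- apply: (upoly_compose he); apply: upoly_M => //; exact: upoly_cst.
- by move=> x hx; apply: Nb_e; apply: BM; auto with kdb.
- by setoid_rewrite hbg; rewrite (Mxyy hm) eb; exact: alr.
- by move=> x hx; setoid_rewrite <- hg; auto; reflexivity.
Qed.
Definition kopp (g : Kt) : Kt := exist (fun g => pb (isK g)) _ (kopp_proof g).

Lemma kmul_proof (g h : Kt) : pb (isK (normK (fun x => val g (val h x)))).
Proof.
have [kg [hkg hNg hbg hg]] := KtP g; have [kh [hkh hNh hbh hh]] := KtP h.
apply: (isK_mk (k := fun x => kg (kh x))).
- exact: upoly_compose hkg hkh.
- by move=> x hx; apply: hNg; apply: hNh.
- exact: alt (cong_upoly hal hkg hbh) hbg.
- move=> x hx; apply: alt _ (als (hg _ (Kt_N h hx))).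
  apply: cong_upoly hal hkg _; apply: als; exact: hh.
Qed.
Definition kmul (g h : Kt) : Kt := exist (fun g => pb (isK g)) _ (kmul_proof g h).

Lemma kzE x : Nb x -> val kz x = rep b. Proof. exact: normKE. Qed.
Lemma koE x : Nb x -> val ko x = rep x. Proof. exact: normKE. Qed.
Lemma kaddE g h x : Nb x -> val (kadd g h) x = rep (e (MM (val g x) b (val h x))).
Proof. exact: normKE. Qed.
Lemma koppE g x : Nb x -> val (kopp g) x = rep (e (MM b (val g x) b)).
Proof. exact: normKE. Qed.
Lemma kmulE g h x : Nb x -> val (kmul g h) x = rep (val g (val h x)).
Proof. exact: normKE. Qed.

Ltac kE := repeat first [rewrite kzE | rewrite koE | rewrite kaddE | rewrite koppE | rewrite kmulE].

Definition NA y := exists z, Nb z /\ al y z.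
Lemma NA_Nb y : Nb y -> NA y. Proof. by move=> h; exists y; split=> //; exact: alr. Qed.
Lemma e_alA y : NA y -> al (e y) y.
Proof.
case=> z [hz ayz]; apply: alt (cong_upoly hal he ayz) _; rewrite e_N //; exact: als.
Qed.
Lemma NA_M x y z : NA x -> NA y -> NA z -> NA (MM x y z).
Proof.
case=> x' [hx ax] [y' [hy ay]] [z' [hz az]].
exists (e (MM x' y' z')); split; first by apply: Nb_e; apply: BM; auto with kdb.
apply: alt (cong_M hm hal ax ay az) _; apply: als; apply: e_alA.
exists (e (MM x' y' z')); split; first by apply: Nb_e; apply: BM; auto with kdb.
apply: als; exact: edrop.
Qed.
Lemma NA_e y : NA y -> NA (e y).
Proof. move=> h; case: (h) => z [hz ayz]; exists z; split=> //; exact: alt (e_alA h) ayz. Qed.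
Lemma Nb_repA y : NA y -> Nb (rep y).
Proof. case=> z [hz ayz]; rewrite -(rep_eq (als ayz) hz); exact: Nb_rep. Qed.
Lemma rep_alA y : NA y -> al (rep y) y.
Proof. case=> z [hz ayz]; rewrite -(rep_eq (als ayz) hz); exact: alt (rep_al hz) (als ayz). Qed.
Lemma NA_rep y : NA y -> NA (rep y).
Proof. by move=> h; apply: NA_Nb; apply: Nb_repA. Qed.
Lemma NA_Kt (g : Kt) x : Nb x -> NA (val g x).
Proof. by move=> h; apply: NA_Nb; apply: Kt_N. Qed.
Hint Resolve NA_Nb NA_M NA_e NA_rep NA_Kt : kdb.

Ltac rw_rep := setoid_rewrite rep_alA; [| solve [auto 20 with kdb] ..].
Ltac rw_e := setoid_rewrite e_alA; [| solve [auto 20 with kdb] ..].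
Ltac knorm := repeat rw_rep; repeat rw_e.

Lemma kaddA : associative kadd.
Proof.
move=> g h i; apply: Kt_eq => x hx; rewrite !kaddE; auto with kdb.
knorm; symmetry; apply: Aassoc; auto with kdb.
Qed.
Lemma kaddC : commutative kadd.
Proof.
move=> g h; apply: Kt_eq => x hx; rewrite !kaddE; auto with kdb.
knorm; apply: Acomm; auto with kdb.
Qed.
Lemma kadd0 : left_id kz kadd.
Proof.
move=> g; apply: Kt_eq => x hx; rewrite !kaddE ?kzE; auto with kdb.
knorm; rewrite (Myyx hm); reflexivity.
Qed.
Lemma kaddN : left_inverse kz kopp kadd.
Proof.
move=> g; apply: Kt_eq => x hx; rewrite !kaddE ?koppE ?kzE; auto with kdb.
knorm; apply: alt (Acomm _ _) (Ainv _); auto with kdb.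
Qed.
Lemma kmulA : associative kmul.
Proof.
move=> g h i; apply: Kt_eq => x hx; rewrite !kmulE ?Kt_rep; auto with kdb.
knorm; reflexivity.
Qed.
Lemma kmul1l : left_id ko kmul.
Proof.
move=> g; apply: Kt_eq => x hx; rewrite !kmulE ?koE; auto with kdb.
knorm; reflexivity.
Qed.
Lemma kmul1r : right_id ko kmul.
Proof.
move=> g; apply: Kt_eq => x hx; rewrite !kmulE ?koE ?Kt_rep; auto with kdb.
knorm; reflexivity.
Qed.
Lemma kmulDl : left_distributive kmul kadd.
Proof.
move=> g h i; apply: Kt_eq => x hx; rewrite !kmulE ?kaddE ?kmulE; auto with kdb.
knorm; reflexivity.
Qed.
Lemma Kt_lin (g : Kt) u v : Nb u -> Nb v ->
  al (val g (e (MM u b v))) (MM (val g u) b (val g v)).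
Proof.
move=> hu hv; have [kg [hkg hNg hbg hg]] := KtP g.
have hN : Nb (e (MM u b v)) by apply: Nb_e; auto with kdb.
apply: alt (hg _ hN) _.
apply: alt (cong_upoly hal hkg (e_alA _)) _; first by auto 20 with kdb.
apply: alt (als (lin hkg _ _)) _; try (apply: Bga; auto with kdb).
apply: (cong_M hm hal); [apply: als; exact: hg| exact: hbg| apply: als; exact: hg].
Qed.
Lemma kmulDr : right_distributive kmul kadd.
Proof.
move=> g h i; apply: Kt_eq => x hx; rewrite !kmulE ?kaddE ?kmulE ?Kt_rep; auto 20 with kdb.
knorm; apply: alt (Kt_lin _ _ _) _; auto with kdb; symmetry; apply: e_alA; auto 20 with kdb.
Qed.
Lemma konz : ko != kz.
Proof.
apply/negP => /eqP e1; have := congr1 (fun g : Kt => val g b') e1.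
rewrite /= koE ?kzE; auto with kdb => e2.
apply: nbb'; have h := als (rep_al Nb_b'); rewrite e2 in h.
exact: als (alt h (rep_al Nb_b)).
Qed.

Lemma iter_al (q : T -> T) j x y : unary_poly op q -> al x y -> al (iter j q x) (iter j q y).
Proof.
move=> hq axy; elim: j => [|j IH] //=; exact: cong_upoly hal hq IH.
Qed.

Lemma zero_or_inj (g : Kt) :
  g = kz \/ (forall x y, Nb x -> Nb y -> al (val g x) (val g y) -> al x y).
Proof.
have [k [hk hN hb0 hg]] := KtP g.
pose q x := e (k (e x)).
have hq : unary_poly op q.
  exact: (upoly_compose he (upoly_compose hk he)).
have qN x : Nb x -> q x = k x by move=> hx; rewrite /q e_N // e_N //; exact: hN.
case: (classic (sep al ga q)) => [hs | hns].
- right => x y hx hy axy.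
  have sub : img q \subset img f by apply/subsetP => z /imsetP [t _ ->]; rewrite /q; exact: heU.
  have iq := hmin hq hs sub.
  have surj : forall u, u \in img f -> exists2 w, w \in img f & q w = u.
    move=> u; rewrite -iq => /imsetP [t _ ->]; exists (e t); first by rewrite iq; exact: heU.
    by rewrite /q (heid (heU t)).
  have [j j0 hj] := perm_iter surj.
  have aq : al (q x) (q y).
    rewrite !qN //; exact: alt (als (hg _ hx)) (alt axy (hg _ hy)).
  case: j j0 hj => [|j] // _ hj; have := iter_al j hq aq; rewrite -!iterSr (hj _ (NbU hx)) (hj _ (NbU hy)); exact.
- left; apply: Kt_eq => x hx; rewrite kzE //.
  have h1 : al (q b) (q x).
    case: (classic (al (q b) (q x))) => // nh; exfalso; apply: hns.
    by exists b, x; split=> //; move: hx; case/andP => _ /pbP.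
  rewrite !qN // in h1; last exact: Nb_b.
  apply: alt (hg _ hx) _; apply: alt (als h1) _; apply: alt hb0 _.
  apply: als; exact: rep_al Nb_b.
Qed.

Lemma kdom (g h : Kt) : kmul g h = kz -> g = kz \/ h = kz.
Proof.
move=> gh; case: (zero_or_inj g) => [-> | inj]; [by left| right].
apply: Kt_eq => x hx; rewrite kzE //.
have := congr1 (fun k : Kt => val k x) gh; rewrite /= kmulE // kzE // => e1.
have a1 : al (val g (val h x)) (val g b).
  apply: alt (als (rep_al _)) _; first by auto with kdb.
  rewrite e1; apply: alt (rep_al Nb_b) _; apply: als; exact: Kt_b.
have := inj _ _ (Kt_N h hx) Nb_b a1 => a2.
apply: alt a2 (als (rep_al Nb_b)).
Qed.
Definition KFt : finFieldType :=
  KF kaddA kaddC kadd0 kaddN kmulA kmul1l kmul1r kmulDl kmulDr konz kdom.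
Definition toK (g : KFt) : Kt := g.
Definition ev (g : KFt) : T := val (toK g) b'.

Local Open Scope ring_scope.
Lemma KaddE (g h : KFt) : toK (g + h) = kadd (toK g) (toK h). Proof. exact (erefl (kadd (toK g) (toK h))). Qed.
Lemma KmulE (g h : KFt) : toK (g * h) = kmul (toK g) (toK h). Proof. exact (erefl (kmul (toK g) (toK h))). Qed.
Lemma KoppE (g : KFt) : toK (- g) = kopp (toK g). Proof. exact (erefl (kopp (toK g))). Qed.
Lemma KzE : toK 0 = kz. Proof. exact (erefl kz). Qed.
Definition ofK (g : Kt) : KFt := g.
Lemma toK_ofK g : toK (ofK g) = g. Proof. exact (erefl g). Qed.
Lemma ofK_toK g : ofK (toK g) = g. Proof. exact (erefl g). Qed.
#[local] Opaque KFt.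

Lemma Kt_add_b' (g h : Kt) : al (val (kadd g h) b') (MM (val g b') b (val h b')).
Proof. rewrite kaddE; auto with kdb; knorm; reflexivity. Qed.
Lemma Kt_mul_b' (g h : Kt) : al (val (kmul g h) b') (val g (val h b')).
Proof. rewrite kmulE; auto with kdb; knorm; reflexivity. Qed.
Lemma Kt_uniq (g h : Kt) : al (val g b') (val h b') -> kadd g (kopp h) = kz.
Proof.
move=> agh; case: (zero_or_inj (kadd g (kopp h))) => [//|inj]; exfalso; apply: nbb'.
apply: als; apply: inj; [exact: Nb_b'| exact: Nb_b|].
apply: alt _ (als (Kt_b _)).
rewrite kaddE ?koppE; auto with kdb; knorm.
apply: alt _ (Ainv (x := val h b') _); last by auto with kdb.
apply: (cong_M hm hal); [exact: agh| exact: alr| exact: alr].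
Qed.
Lemma ev_N g : Nb (ev g). Proof. exact: Kt_N Nb_b'. Qed.
Hint Resolve ev_N : kdb.
Lemma ev_add (g h : KFt) : al (ev (g + h)) (MM (ev g) b (ev h)).
Proof. rewrite /ev KaddE; exact: Kt_add_b'. Qed.
Lemma ev_mul (g h : KFt) : al (ev (g * h)) (val (toK g) (ev h)).
Proof. rewrite /ev KmulE; exact: Kt_mul_b'. Qed.
Lemma ev_uniq (g h : KFt) : al (ev g) (ev h) -> g = h.
Proof.
move=> agh; apply: subr0_eq; have := Kt_uniq agh.
by rewrite -KoppE -KaddE -KzE => /(congr1 ofK); rewrite !ofK_toK.
Qed.

Lemma dim1 y : Nb y -> exists g : KFt, al (ev g) y.
Proof.
move=> hy.
have gby : ga b y by move: hy => /andP [_ /pbP].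
have [h [hh h1 h2]] := genR gbb' nbb' gby.
have sub : rle al ga by case: hpq.
have pr : pb (isK (normK (fun x => e (h x)))).
  apply: (isK_mk (k := fun x => e (h x))).
  - exact: upoly_compose he hh.
  - move=> x hx; apply: Nb_e; rewrite /B.
    apply: gat (sub _ _ (als h1)) (cong_upoly hga hh (NbB hx)).
  - rewrite -{2}eb; exact: cong_upoly hal he h1.
  - move=> *; exact: alr.
exists (ofK (exist (fun g => pb (isK g)) _ pr)); rewrite /ev toK_ofK /= normKE; auto with kdb.
apply: alt (rep_alA _) _; first by apply: NA_e; exists y.
rewrite -(e_N hy); exact: cong_upoly hal he h2.
Qed.

Definition phi (y : T) : KFt := odflt 0 [pick g : KFt | pb (al (ev g) y)].
Lemma phi_spec y : Nb y -> al (ev (phi y)) y.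
Proof.
move=> hy; rewrite /phi; case: pickP => [g /pbP //|].
by have [g hg] := dim1 hy; move/(_ g); move/pbP: hg => ->.
Qed.
Lemma phi_eq y g : Nb y -> al (ev g) y -> phi y = g.
Proof. move=> hy hg; apply: ev_uniq; exact: alt (phi_spec hy) (als hg). Qed.

Lemma Nb_eq x : Nb x <-> (x \in img f /\ ga b x).
Proof. by rewrite /Nb; split => [/andP [h /pbP]|[h1 h2]] //; rewrite h1; apply/pbP. Qed.

Lemma cond3 n (p : ('I_n -> T) -> T) : is_poly op p ->
  (forall x, (forall i, Nb (x i)) -> Nb (p x)) ->
  exists (c : 'I_n -> KFt) (v0 : KFt), forall x, (forall i, Nb (x i)) ->
    phi (p x) = v0 + \sum_(i < n) c i * phi (x i).
Proof.
move=> hp hpN.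
pose bb := fun _ : 'I_n => b.
have pbN : Nb (p bb) by apply: hpN => i; exact: Nb_b.
pose upd (i : 'I_n) u := fun j => if j == i then u else b.
have updN i u : Nb u -> forall j, Nb (upd i u j).
  by move=> hu j; rewrite /upd; case: (j == i) => //; exact: Nb_b.
pose L i u := e (MM (p (upd i u)) (p bb) b).
have Lpr i : pb (isK (normK (L i))).
  apply: (isK_mk (k := L i)).
  - apply: (upoly_compose he); apply: (upoly_M hm); [|exact: upoly_cst| exact: upoly_cst].
    apply: (poly_comp (q := fun j (y : 'I_1 -> T) => upd i (y ord0) j) hp) => j.
    by rewrite /upd; case: (j == i); [exact: poly_proj| exact: poly_cst].
  - move=> u hu; apply: Nb_e; apply: BM; auto with kdb.
  - rewrite /L; have -> : upd i b = bb by apply: functional_extensionality => j; rewrite /upd; case: (j == i).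
    by rewrite (Myyx hm) eb; exact: alr.
  - move=> *; exact: alr.
pose c i : KFt := ofK (exist (fun g => pb (isK g)) _ (Lpr i)).
exists c, (phi (p bb)) => x hx.
pose xj j := fun i : 'I_n => if (i < j)%N then x i else b.
have xjN j i : Nb (xj j i) by rewrite /xj; case: ifP => _ //; exact: Nb_b.
have key : forall j, (j <= n)%N ->
    al (p (xj j)) (ev (phi (p bb) + \sum_(i < n | (i < j)%N) c i * phi (x i))).
  elim=> [_|j IH hj].
  - rewrite big_pred0 // addr0.
    have -> : xj 0%N = bb by apply: functional_extensionality => i.
    exact: als (phi_spec pbN).
  - rewrite (sum_splitS _ hj) addrA; set o := Ordinal hj.
    apply: alt _ (als (ev_add _ _)).
    have e1 : al (ev (c o * phi (x o))) (MM (p (upd o (x o))) (p bb) b).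
      apply: alt (ev_mul _ _) _.
      rewrite (Kt_compat _ (ev_N _) (hx o) (phi_spec (hx o))).
      rewrite /c toK_ofK /= normKE //.
      apply: alt (rep_alA _) (e_alA _); auto 20 with kdb.
    have e2 : p (xj j.+1) = p (fun i => MM (xj j i) (bb i) (upd o (x o) i)).
      congr p; apply: functional_extensionality => i.
      rewrite /xj /upd /bb -val_eqE /=.
      case: (ltngtP i j) => h.
      + by rewrite ltnS (ltnW h) (Mxyy hm).
      + by rewrite ltnNge h (Mxyy hm).
      + have -> : i = o by apply: val_inj.
        by rewrite /= ltnSn (Myyx hm).
    have aff := affine hm hga hder hC (x := xj j) (y := bb) (z := upd o (x o)) hp.
    rewrite e2; apply: alt (als (hdal (aff _ _))) _.
    + by move=> i; apply: Bga; auto with kdb.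
    + by move=> i; apply: Bga; auto with kdb.
    apply: alt (Mdec _ _ _) _; auto with kdb.
    apply: (cong_M hm hal); [exact: IH (ltnW hj)| exact: alr| exact: als e1].
have := key n (leqnn n).
have -> : xj n = x by apply: functional_extensionality => i; rewrite /xj ltn_ord.
rewrite (eq_bigl xpredT) => [h|i]; last by rewrite ltn_ord.
apply: phi_eq; first by exact: hpN.
exact: als h.
Qed.

Definition Gstep n (kk : 'I_n -> T -> T) (j : nat) (acc : ('I_n -> T) -> T) :
    ('I_n -> T) -> T :=
  fun x => match (insub j : option 'I_n) with
           | Some i => e (MM (acc x) b (kk i (x i)))
           | None => acc x end.
Fixpoint G n (kk : 'I_n -> T -> T) (w0 : T) (j : nat) : ('I_n -> T) -> T :=
  match j with 0 => fun _ => w0 | j'.+1 => Gstep kk j' (G kk w0 j') end.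

Lemma cond4 n (c : 'I_n -> KFt) (v0 : KFt) :
  exists p : ('I_n -> T) -> T, [/\ is_poly op p,
    (forall x, (forall i, Nb (x i)) -> Nb (p x)) &
    forall x, (forall i, Nb (x i)) -> phi (p x) = v0 + \sum_(i < n) c i * phi (x i)].
Proof.
pose kk i := proj1_sig (cid_ex (KtP (toK (c i)))).
have kkP i : [/\ unary_poly op (kk i), (forall x, Nb x -> Nb (kk i x)), al (kk i b) b &
      forall x, Nb x -> al (val (toK (c i)) x) (kk i x)].
  by rewrite /kk; case: cid_ex.
pose w0 := ev v0.
have Gp : forall j, is_poly op (G kk w0 j).
  elim=> [|j IH] /=; first exact: poly_cst.
  rewrite /Gstep; case: (insub j) => [i|] //.
  apply: upoly_app he _; apply: poly_M => //; first exact: poly_cst.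
  by case: (kkP i) => hk _ _ _; apply: upoly_app hk _; exact: poly_proj.
have GN : forall j x, (forall i, Nb (x i)) -> Nb (G kk w0 j x).
  move=> + x hx; elim=> [|j IH] /=; first exact: ev_N.
  rewrite /Gstep; case: (insub j) => [i|] //.
  by case: (kkP i) => _ hN _ _; apply: Nb_e; apply: BM; auto with kdb.
exists (G kk w0 n); split; [exact: Gp| exact: GN|] => x hx.
have key : forall j, (j <= n)%N ->
    al (G kk w0 j x) (ev (v0 + \sum_(i < n | (i < j)%N) c i * phi (x i))).
  elim=> [_|j IH hj].
  - by rewrite big_pred0 // addr0; exact: alr.
  - rewrite (sum_splitS _ hj) addrA; set o := Ordinal hj.
    apply: alt _ (als (ev_add _ _)).
    rewrite /= /Gstep; case: insubP => [i _ vi|]; last by rewrite /= hj.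
    have -> : i = o by apply: val_inj.
    have hG := GN j x hx.
    case: (kkP o) => hk hN _ hc.
    apply: alt (e_alA _) _; first by apply: NA_M; auto with kdb.
    apply: (cong_M hm hal); [exact: IH (ltnW hj)| exact: alr|].
    apply: als; apply: alt (ev_mul _ _) _.
    rewrite (Kt_compat _ (ev_N _) (hx o) (phi_spec (hx o))).
    exact: hc.
have := key n (leqnn n).
rewrite (eq_bigl xpredT) => [h|i]; last by rewrite ltn_ord.
apply: phi_eq; first exact: GN.
exact: als h.
Qed.
Lemma core_main : type2 op al ga /\ minimal_set op al ga (img f).
Proof.
have hms : minimal_set op al ga (img f).
  split; last exact: hmin.
  by exists f; split=> //; exists x0, y0; split.
split=> //; split=> //.
pose N := fun x => x \in img f /\ ga b x.
have NP x : N x <-> Nb x by rewrite Nb_eq.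
exists (img f), N; split=> //.
  exists b; split; [exact: bU| by []|].
  exists b, b'; split; [exact/NP/Nb_b| exact/NP/Nb_b'| exact: nbb'].
exists KFt, KFt^o, phi; split.
- move=> x y /NP hx /NP hy; split => [e1|a1].
  + apply: alt (als (phi_spec hx)) _; rewrite e1; exact: phi_spec hy.
  + apply: esym; apply: phi_eq => //; exact: alt (phi_spec hx) a1.
- move=> v; exists (ev v); split; first exact/NP/ev_N.
  apply: phi_eq; [exact: ev_N| exact: alr].
- move=> n p hp hpN.
  have hpN' : forall x, (forall i, Nb (x i)) -> Nb (p x).
    by move=> x hx; apply/NP; apply: hpN => i; apply/NP.
  have [c [v0 hc]] := cond3 hp hpN'.
  exists c, v0 => x hx; rewrite hc //; move=> i; exact/NP.
- move=> n c v0; have [p [hp hpN hc]] := cond4 c v0.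
  exists p; split=> //.
  + move=> x hx; apply/NP; apply: hpN => i; exact/NP.
  + move=> x hx; rewrite hc //; move=> i; exact/NP.
Qed.
End Core.

End P4m.
Import P4m.

Module P5m.
Set Implicit Arguments. Unset Strict Implicit. Unset Printing Implicit Defensive.

Section Outer.
Variables (T : finType) (I : Type) (ar : I -> nat)
          (op : forall i : I, ('I_(ar i) -> T) -> T).
Variable m : ('I_3 -> T) -> T.
Hypothesis hm : maltsev_poly op m.
Local Notation MM := (M m).

Lemma comm_cong (a c : T -> T -> Prop) : congruence op (commutator op a c).
Proof.
split.
- by move=> x d [hr _ _ _] _.
- by move=> x y h d hd hC; case: (hd) => _ hs _ _; apply: hs; exact: h.
- by move=> x y z h1 h2 d hd hC; case: (hd) => _ _ ht _; apply: ht (h1 d hd hC) (h2 d hd hC).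
- by move=> i x y h d hd hC; case: (hd) => _ _ _ hc; apply: hc => j; exact: h j d hd hC.
Qed.

Lemma comm_C (a c : T -> T -> Prop) : centralizes op a c (commutator op a c).
Proof.
intros k n t ht a1 b1 c1 d1 hab hcd h d hd hC.
exact: hC k n t ht a1 b1 c1 d1 hab hcd (h d hd hC).
Qed.

Lemma C_mono (a c d a' c' : T -> T -> Prop) : centralizes op a c d ->
  rle a' a -> rle c' c -> centralizes op a' c' d.
Proof.
move=> hC ha hc; intros k n t ht a1 b1 c1 d1 hab hcd.
apply: (hC _ _ _ ht a1 b1 c1 d1) => [i|j]; [exact: ha| exact: hc].
Qed.

Lemma total_cong : congruence op (fun _ _ => True).
Proof. by split. Qed.

Lemma derived_cong j : congruence op (derived op j).
Proof. case: j => [|j]; [exact: total_cong| exact: comm_cong]. Qed.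

Definition Sp (g : T -> T -> Prop) := exists k (p : ('I_k -> T) -> T) (Us : 'I_k -> {set T}),
  [/\ is_poly op p, (forall i, type2_minimal_set op (Us i)) &
      forall a, exists u : 'I_k -> T, (forall i, u i \in Us i) /\ g (p u) a].

Lemma Sp_mono g g' : Sp g -> rle g g' -> Sp g'.
Proof.
move=> [k [p [Us [hp hU hc]]]] hgg; exists k, p, Us; split=> // a.
by have [u [hu hg]] := hc a; exists u; split=> //; exact: hgg.
Qed.

Lemma Sp_total : 0 < #|T| -> Sp (fun _ _ => True).
Proof.
case/card_gt0P => a0 _.
exists 0%N, (fun _ => a0), (fun _ => set0).
split; [exact: poly_cst| by case| move=> a; exists (fun i => a0); split=> //; by case].
Qed.

Lemma join_lft k n (a : 'I_k -> T) (c : 'I_n -> T) : (fun i => join_args a c (lshift n i)) = a.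
Proof. by apply: functional_extensionality => i; rewrite /join_args split_l. Qed.
Lemma join_rgt k n (a : 'I_k -> T) (c : 'I_n -> T) : (fun i => join_args a c (rshift k i)) = c.
Proof. by apply: functional_extensionality => i; rewrite /join_args split_r. Qed.

Fixpoint GS K (hz : 'I_K -> T -> T) (bb : T) (j : nat) (x : T) (w : 'I_K -> T) : T :=
  match j with
  | 0 => x
  | j'.+1 => match (insub j' : option 'I_K) with
             | Some i => MM (GS hz bb j' x w) (hz i bb) (hz i (w i))
             | None => GS hz bb j' x w end
  end.

Lemma GS_poly K (hz : 'I_K -> T -> T) bb n (X : ('I_n -> T) -> T) (W : 'I_K -> ('I_n -> T) -> T) :
  (forall i, unary_poly op (hz i)) -> is_poly op X -> (forall i, is_poly op (W i)) ->
  forall j, is_poly op (fun v => GS hz bb j (X v) (fun i => W i v)).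
Proof.
move=> hh hX hW; elim=> [|j IH] //=.
case: (insub j) => [i|] //.
apply: poly_M => //; first exact: poly_cst.
exact: upoly_app (hh i) (hW i).
Qed.

Lemma Sp_step (al ga : T -> T -> Prop) (U : {set T}) (b b' : T) :
  congruence op al -> congruence op ga -> prime_quotient op al ga ->
  type2_minimal_set op U -> b \in U -> b' \in U -> ga b b' -> ~ al b b' ->
  Sp ga -> Sp al.
Proof.
move=> hal hga hpq hU bU b'U gbb nbb [k [p [Us [hp hUs hc]]]].
have hh : forall z : T * T, exists h, unary_poly op h /\
    (ga z.1 z.2 -> al (h b) z.1 /\ al (h b') z.2).
  move=> z; case: (classic (ga z.1 z.2)) => g.
  - have [h [hh1 h1 h2]] := genR hm hal hga hpq gbb nbb g; by exists h.
  - exists id; split; [exact: upoly_id| by []].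
pose K := #|{: T * T}|.
pose hz (i : 'I_K) := proj1_sig (cid_ex (hh (enum_val i))).
have hzP i : unary_poly op (hz i) /\ (ga (enum_val i).1 (enum_val i).2 ->
    al (hz i b) (enum_val i).1 /\ al (hz i b') (enum_val i).2).
  by rewrite /hz; case: cid_ex.
pose Us' (i : 'I_(k + K)) := match split i with inl i' => Us i' | inr _ => U end.
exists (k + K)%N, (fun v => GS hz b K (p (fun i => v (lshift K i))) (fun i => v (rshift k i))), Us'.
split.
- apply: GS_poly; [by move=> i; case: (hzP i)| |by move=> i; exact: poly_proj].
  exact: (poly_comp (q := fun i (v : 'I_(k + K) -> T) => v (lshift K i)) hp (fun i => poly_proj _ _)).
- by move=> i; rewrite /Us'; case: (split i).
move=> a; have [u [hu gpa]] := hc a.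
pose iz := enum_rank (p u, a).
pose w (i : 'I_K) := if i == iz then b' else b.
exists (join_args u w); split.
  move=> i; rewrite /Us' /join_args; case: (split i) => j //.
  by rewrite /w; case: (j == iz).
rewrite join_lft join_rgt.
have claim : forall j, (j <= K)%N ->
    GS hz b j (p u) w = if (j <= iz)%N then p u else MM (p u) (hz iz b) (hz iz b').
  elim=> [|j IH] hj /=; first by [].
  case: insubP => [i _ vi|]; last by rewrite hj.
  rewrite IH ?(ltnW hj) // /w.
  case: (eqVneq i iz) => [ei|ni].
  - have -> : (j <= iz)%N by rewrite -ei vi.
    by rewrite ei ltnNge -ei vi leqnn.
  - have nj : j != iz by apply: contra ni => /eqP e1; apply/eqP; apply: val_inj; rewrite vi e1.
    rewrite ltn_neqAle nj /=.
    by case: ifP => _; rewrite (Mxyy hm).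
rewrite claim // leqNgt ltn_ord /=.
have [_ /(_ _)] := hzP iz; rewrite /iz enum_rankK /=; case=> // a1 a2.
have r : al (p u) (p u) by case: hal.
by have := cong_M hm hal r a1 a2; rewrite (Myyx hm).
Qed.
Lemma not_rle (R S : T -> T -> Prop) : ~ rle R S -> exists x y, R x y /\ ~ S x y.
Proof.
move=> nr; apply: NNPP => H; apply: nr => x y rxy; apply: NNPP => nS; apply: H.
by exists x, y.
Qed.

Lemma type2_data (al ga de : T -> T -> Prop) :
  congruence op al -> congruence op ga -> prime_quotient op al ga ->
  (forall x, de x x) -> rle de al -> centralizes op ga ga de ->
  exists U b b', [/\ type2_minimal_set op U, b \in U, b' \in U, ga b b' & ~ al b b'].
Proof.
move=> hal hga hpq hder hdal hC.
have [_ _ _ nga _] := hpq.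
have [x1 [y1 [g1 n1]]] := not_rle nga.
pose P n := pb (exists f, [/\ unary_poly op f, sep al ga f & #|img f| = n]).
have exP : exists n, P n.
  exists #|img (@id T)|; apply/pbP; exists (@id T); split=> //; first exact: upoly_id.
  by exists x1, y1.
case: (ex_minnP exP) => n /pbP [f [hf [x0 [y0 [gxy nxy]]] cf]] minf.
have hmin : forall g, unary_poly op g -> sep al ga g -> img g \subset img f -> img g = img f.
  move=> g hg sg sub; apply/eqP; rewrite eqEcard sub /= cf.
  by apply: minf; apply/pbP; exists g.
have [e [he heU heid]] := e_ex hm hal hga hpq hf gxy nxy hmin (erefl (f x0)).
have [t2 ms] := core_main hm hal hga hpq hder hdal hC hf gxy nxy hmin (erefl (f x0)) he heU heid.
exists (img f), (f x0), (f y0); split.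
- by exists al, ga.
- exact: in_img.
- exact: in_img.
- exact: cong_upoly hga hf gxy.
- exact: nxy.
Qed.

Definition cnt (R : T -> T -> Prop) := #|[set z : T * T | pb (R z.1 z.2)]|.
Lemma cnt_le R S : rle R S -> (cnt R <= cnt S)%N.
Proof.
move=> h; apply: subset_leq_card; apply/subsetP => z; rewrite !inE => /pbP rz.
by apply/pbP; exact: h.
Qed.
Lemma cnt_eq R S : rle R S -> (cnt S <= cnt R)%N -> rle S R.
Proof.
move=> h c x y sxy.
have sub : [set z : T * T | pb (R z.1 z.2)] \subset [set z : T * T | pb (S z.1 z.2)].
  by apply/subsetP => z; rewrite !inE => /pbP rz; apply/pbP; exact: h.
have /eqP eq : [set z : T * T | pb (R z.1 z.2)] == [set z : T * T | pb (S z.1 z.2)].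
  by rewrite eqEcard sub.
have : (x, y) \in [set z : T * T | pb (S z.1 z.2)] by rewrite inE; apply/pbP.
by rewrite -eq inE => /pbP.
Qed.
Lemma cnt_max R : (cnt R <= #|{: T * T}|)%N.
Proof. exact: max_card. Qed.

Lemma Sp_interval (lo hi : T -> T -> Prop) :
  congruence op lo -> congruence op hi -> centralizes op hi hi lo -> Sp hi ->
  forall rho, congruence op rho -> rle lo rho -> rle rho hi -> Sp rho.
Proof.
move=> hlo hhi hC shi.
suff H : forall n rho, (#|{: T * T}| - cnt rho < n)%N -> congruence op rho ->
    rle lo rho -> rle rho hi -> Sp rho.
  by move=> rho; apply: (H (#|{: T * T}| - cnt rho).+1).
elim=> [//|n IH] rho hn hrho lr rh.
case: (classic (rle hi rho)) => [hr|nhr]; first exact: Sp_mono shi hr.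
pose P k := pb (exists eta, [/\ congruence op eta, rle rho eta, rle eta hi,
                                ~ rle eta rho & cnt eta = k]).
have exP : exists k, P k.
  by exists (cnt hi); apply/pbP; exists hi; split.
case: (ex_minnP exP) => k /pbP [eta [heta re eh ner ck]] mink.
have hpq : prime_quotient op rho eta.
  split=> // gam hgam rg ge.
  case: (classic (rle gam rho)) => [h|h]; [by left| right].
  apply: cnt_eq => //; rewrite ck; apply: mink; apply/pbP; exists gam; split=> //.
  by move=> x y /ge; exact: eh.
have lt1 : (cnt rho < cnt eta)%N.
  rewrite ltn_neqAle cnt_le // andbT; apply/negP => /eqP e1.
  by apply: ner; apply: cnt_eq => //; rewrite e1.
have seta : Sp eta.
  apply: IH => //; last by move=> x y /lr /re.
  have := cnt_max eta; lia.
have hlo_r : forall x, lo x x by case: hlo.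
have [U [b [b' [hU bU b'U gbb nbb]]]] :=
  type2_data hrho heta hpq hlo_r lr (C_mono hC eh eh).
exact: Sp_step hrho heta hpq hU bU b'U gbb nbb seta.
Qed.

Lemma comm_le (a c : T -> T -> Prop) : congruence op c -> rle (commutator op a c) c.
Proof.
move=> hc x y h; apply: h => //.
intros k n t ht a1 b1 c1 d1 hab hcd _.
case: ht => tt [_ htt].
have hp : is_poly op t by exists tt.
apply: (cong_poly hc hp) => i; rewrite /join_args; case: (split i) => j //.
by case: hc.
Qed.
End Outer.


End P5m.
Import P5m.

Theorem corollary5p5  (T : finType) (I : Type) (ar : I -> nat)
  (op : forall i : I, ('I_(ar i) -> T) -> T) :
  0 < #|T| ->
  solvable_alg op ->
  (exists m, maltsev_poly op m) ->
  spread_of op (type2_minimal_set op).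
Proof.
move=> hT [K hK] [m hm].
have D : forall j, Sp op (derived op j).
  elim=> [|j IH]; first exact: Sp_total.
  apply: (Sp_interval hm (derived_cong op j.+1) (derived_cong op j) (comm_C (a := derived op j) (c := derived op j)) IH
    (derived_cong op j.+1)).
  - by move=> x y h.
  - exact: comm_le (derived_cong op j).
have [k [p [Us [hp hU hc]]]] := D K.
exists k, p, Us; split=> // a.
have [u [hu h]] := hc a; exists u; split=> //; exact: hK.
Qed.
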